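(* Fix a UL-chain $\mathbf{A}$ and a predicate language $\mathcal{P}$, and let $\mathscr{K}$ be a countable class of finitely generated $\mathbf{A}$-structures for $\mathcal{P}$ (classes being considered up to isomorphism). Then $\mathscr{K}=\mathrm{Age}(\mathbf{A},\mathbf{N})$ for some $\mathbf{A}$-structure $\langle \mathbf{A},\mathbf{N}\rangle$ if and only if $\mathscr{K}$ satisfies the hereditary property (HP) and the joint embedding property (JEP). Furthermore, if $\mathscr{K}$ is a class of $\mathbf{A}$-structures for $\mathcal{P}$ of arbitrary cardinality which satisfies HP and JEP and is closed under unions of chains, then $\mathscr{K}=\mathrm{Age}(\mathbf{A},\mathbf{N})$ for some $\mathbf{A}$-structure $\langle\mathbf{A},\mathbf{N}\rangle$.
   Context: A UL-algebra is a structure $\mathbf{A}=\langle A,\wedge,\vee,\&,\to,\bar 0,\bar 1,\bot,\top\rangle$ such that $\langle A,\wedge,\vee,\bot,\top\rangle$ is a bounded lattice, $\langle A,\&,\bar 1\rangle$ is a commutative monoid, $a\& b\le c$ iff $b\le a\to c$ for all $a,b,c$, and $((a\to b)\wedge\bar 1)\vee((b\to a)\wedge \bar 1)=\bar 1$ for all $a,b$. A UL-chain is a UL-algebra whose lattice order is linear. A predicate language $\mathcal{P}$ consists of predicate symbols and function symbols, each with an arity. An $\mathbf{A}$-structure $\langle\mathbf{A},\mathbf{M}\rangle$ consists of a set $M$, a function $P_{\mathbf{M}}:M^n\to A$ for each $n$-ary predicate symbol $P$, and a function $F_{\mathbf{M}}:M^n\to M$ for each $n$-ary function symbol $F$. Terms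 are evaluated as usual; the truth value of an atomic formula $P(t_1,\dots,t_n)$ is $P_{\mathbf{M}}$ applied to the values of the terms, and quantifier-free formulas (built with the connectives $\wedge,\vee,\&,\to,\bar0,\bar1,\bot,\top$) are evaluated by the corresponding operations of $\mathbf{A}$; $\|\varphi(\vec d)\|^{\mathbf{A}}_{\mathbf{M}}$ denotes this value. $\langle\mathbf{A},\mathbf{M}\rangle$ is a substructure of $\langle\mathbf{A},\mathbf{N}\rangle$ if $M\subseteq N$, $F_{\mathbf{M}}=F_{\mathbf{N}}$ on tuples from $M$ for every function symbol, and every quantifier-free formula has the same value in both structures on every tuple from $M$. An embedding $\langle Id,f\rangle$ of $\langle\mathbf{A},\mathbf{M}\rangle$ into $\langle\mathbf{A},\mathbf{N}\rangle$ is an injective map $f:M\to N$ commuting with all function symbols and preserving the value of every quantifier-free formula (the map on $\mathbf{A}$ is the identity); an isomorphism is a surjective embedding. A structure is finitely generated if its universe is generated by a finite subset under the function symbols. A chain is a sequence of structures each a substructure of the later ones; its union has as universe the union of the universes with the relations and functions inherited. The age $\mathrm{Age}(\mathbf{A},\mathbf{N})$ is the class of all finitely generated substructures of $\langle\mathbf{A},\mathbf{N}\rangle$ and their isomorphic copies (taken up to isomorphism). $\mathscr{K}$ has HP if it is closed under taking substructures; it has JEP if any two members of $\mathscr{K}$ both embed into some common member of $\mathscr{K}$. *)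

(* Defs.v *)
From Stdlib Require List.
From mathcomp Require Import all_boot.
Set Implicit Arguments.
Unset Strict Implicit.
Unset Printing Implicit Defensive.

Record ULChain := MkULChain {
  ul_car :> Type;
  ul_meet : ul_car -> ul_car -> ul_car;
  ul_join : ul_car -> ul_car -> ul_car;
  ul_mul  : ul_car -> ul_car -> ul_car;
  ul_imp  : ul_car -> ul_car -> ul_car;
  ul_0 : ul_car;
  ul_1 : ul_car;
  ul_bot : ul_car;
  ul_top : ul_car;
  (* bounded lattice; order: a <= b iff a /\ b = a *)
  ul_meetA : forall a b c, ul_meet a (ul_meet b c) = ul_meet (ul_meet a b) c;
  ul_meetC : forall a b, ul_meet a b = ul_meet b a;
  ul_joinA : forall a b c, ul_join a (ul_join b c) = ul_join (ul_join a b) c;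
  ul_joinC : forall a b, ul_join a b = ul_join b a;
  ul_meet_absorb : forall a b, ul_meet a (ul_join a b) = a;
  ul_join_absorb : forall a b, ul_join a (ul_meet a b) = a;
  ul_botP : forall a, ul_meet ul_bot a = ul_bot;
  ul_topP : forall a, ul_meet a ul_top = a;
  ul_mulA : forall a b c, ul_mul a (ul_mul b c) = ul_mul (ul_mul a b) c;
  ul_mulC : forall a b, ul_mul a b = ul_mul b a;
  ul_mul1 : forall a, ul_mul ul_1 a = a;
  ul_residuation : forall a b c,
      ul_meet (ul_mul a b) c = ul_mul a b <-> ul_meet b (ul_imp a c) = b;
  ul_prelin : forall a b,
      ul_join (ul_meet (ul_imp a b) ul_1) (ul_meet (ul_imp b a) ul_1) = ul_1;
  ul_linear : forall a b, ul_meet a b = a \/ ul_meet b a = b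
}.

Record Lang := MkLang {
  psym : Type; parity : psym -> nat;
  fsym : Type; farity : fsym -> nat
}.

Section Structures.
Variables (A : ULChain) (L : Lang).

Record Struc := MkStruc {
  dom : Type;
  pint : forall P : psym L, ('I_(parity P) -> dom) -> ul_car A;
  fint : forall F : fsym L, ('I_(farity F) -> dom) -> dom
}.
Arguments pint : clear implicits.
Arguments fint : clear implicits.

Inductive term (V : Type) : Type :=
| tvar : V -> term V
| tapp (F : fsym L) : ('I_(farity F) -> term V) -> term V.

Inductive qf (V : Type) : Type :=
| fatom (P : psym L) : ('I_(parity P) -> term V) -> qf V
| fmeet : qf V -> qf V -> qf V
| fjoin : qf V -> qf V -> qf V
| fmul  : qf V -> qf V -> qf V
| fimp  : qf V -> qf V -> qf V
| fzero : qf V | fone : qf V | fbot : qf V | ftop : qf V.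

Fixpoint teval (M : Struc) (V : Type) (d : V -> dom M) (t : term V) : dom M :=
  match t with
  | tvar x => d x
  | tapp F args => fint M F (fun i => @teval M V d (args i))
  end.

Fixpoint feval (M : Struc) (V : Type) (d : V -> dom M) (phi : qf V) : ul_car A :=
  match phi with
  | fatom P args => pint M P (fun i => @teval M V d (args i))
  | fmeet p q => @ul_meet A (@feval M V d p) (@feval M V d q)
  | fjoin p q => @ul_join A (@feval M V d p) (@feval M V d q)
  | fmul p q => @ul_mul A (@feval M V d p) (@feval M V d q)
  | fimp p q => @ul_imp A (@feval M V d p) (@feval M V d q)
  | fzero => @ul_0 A | fone => @ul_1 A | fbot => @ul_bot A | ftop => @ul_top A
  end.

(* embeddings <Id, f> and isomorphisms; ||phi(d)|| for tuples d : 'I_n -> M *)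
Definition embedding (M N : Struc) (f : dom M -> dom N) : Prop :=
  injective f /\
  (forall F args, f (fint M F args) = fint N F (fun i => f (args i))) /\
  (forall (n : nat) (phi : qf 'I_n) (d : 'I_n -> dom M),
      @feval N 'I_n (fun i => f (d i)) phi = @feval M 'I_n d phi).

Definition embeds (M N : Struc) : Prop := exists f, @embedding M N f.

Definition isomorphic (M N : Struc) : Prop :=
  exists f, @embedding M N f /\ (forall y, exists x, f x = y).

Record subuniverse (N : Struc) := MkSub {
  sub_mem : dom N -> Prop;
  sub_closed : forall F (args : 'I_(farity F) -> dom N),
      (forall i, sub_mem (args i)) -> sub_mem (fint N F args)
}.

Definition induced (N : Struc) (S : subuniverse N) : Struc :=
  {| dom := {x : dom N | sub_mem S x};
     pint := fun P a => pint N P (fun i => proj1_sig (a i));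
     fint := fun F a => exist _ (fint N F (fun i => proj1_sig (a i)))
                          (@sub_closed N S F (fun i => proj1_sig (a i)) (fun i => proj2_sig (a i))) |}.

Definition generated (M : Struc) (X : dom M -> Prop) (x : dom M) : Prop :=
  forall S : dom M -> Prop,
    (forall F (args : 'I_(farity F) -> dom M),
        (forall i, S (args i)) -> S (fint M F args)) ->
    (forall y, X y -> S y) -> S x.

Definition fin_gen (M : Struc) : Prop :=
  exists l : list (dom M), forall x, generated (fun y => List.In y l) x.

Definition in_class (K : Struc -> Prop) (B : Struc) : Prop :=
  exists C, K C /\ isomorphic B C.

Definition same_class (K1 K2 : Struc -> Prop) : Prop :=
  (forall B, K1 B -> in_class K2 B) /\ (forall B, K2 B -> in_class K1 B).

Definition Age (N : Struc) (B : Struc) : Prop :=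
  exists S : subuniverse N, fin_gen (induced S) /\ isomorphic B (induced S).

(* HP (for finitely generated substructures, as in Hodges) *)
Definition HP (K : Struc -> Prop) : Prop :=
  forall B, K B -> forall S : subuniverse B, fin_gen (induced S) ->
    in_class K (induced S).

Definition JEP (K : Struc -> Prop) : Prop :=
  forall B C, K B -> K C -> exists D, K D /\ embeds B D /\ embeds C D.

Definition countable_class (K : Struc -> Prop) : Prop :=
  exists e : nat -> Struc, forall B, K B -> exists n, isomorphic B (e n).

Definition union_closed (K : Struc -> Prop) : Prop :=
  forall (U : Struc) (I : Type) (S : I -> subuniverse U),
    inhabited I ->
    (forall i j, (forall x, sub_mem (S i) x -> sub_mem (S j) x) \/
                 (forall x, sub_mem (S j) x -> sub_mem (S i) x)) ->
    (forall x, exists i, sub_mem (S i) x) ->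
    (forall i, in_class K (induced (S i))) ->
    in_class K U.

End Structures.

(* Main.v *)
Require Import Defs.
From mathcomp Require Import all_boot.
From Stdlib Require Import ClassicalEpsilon ProofIrrelevance FunctionalExtensionality PropExtensionality Classical Eqdep_dec.
From Stdlib Require List.
Set Implicit Arguments.
Unset Strict Implicit.
Unset Printing Implicit Defensive.



Section Gen.
Variables (A : ULChain) (L : Lang).
Implicit Types M N B C : Struc A L.

Definition cid := constructive_indefinite_description.

Lemma sig_eq (T : Type) (P : T -> Prop) (x y : sig P) :
  proj1_sig x = proj1_sig y -> x = y.
Proof.
case: x => a Ha; case: y => b Hb /= E; subst b.
by rewrite (proof_irrelevance _ Ha Hb).
Qed.

Definition fhom M N (h : dom M -> dom N) :=
  forall F a, h (fint (s:=M) (F:=F) a) = fint (s:=N) (fun i => h (a i)).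
Definition phom M N (h : dom M -> dom N) :=
  forall P a, pint (s:=N) (P:=P) (fun i => h (a i)) = pint (s:=M) a.

Lemma teval_hom M N (h : dom M -> dom N) V (d : V -> dom M) t :
  fhom h -> teval (M:=N) (fun x => h (d x)) t = h (teval d t).
Proof.
move=> hF; elim: t => [v|F a IH] //=.
rewrite hF; congr fint; apply: functional_extensionality => i; exact: IH.
Qed.

Lemma feval_hom M N (h : dom M -> dom N) V (d : V -> dom M) phi :
  fhom h -> phom h -> feval (M:=N) (fun x => h (d x)) phi = feval d phi.
Proof.
move=> hF hP; elim: phi => //=; try by move=> p IHp q IHq; rewrite IHp IHq.
move=> P a.
have -> : (fun i => teval (M:=N) (fun x => h (d x)) (a i)) =
          (fun i => h (teval d (a i))).
  by apply: functional_extensionality => i; rewrite teval_hom.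
exact: hP.
Qed.

Lemma emb_intro M N (h : dom M -> dom N) :
  injective h -> fhom h -> phom h -> embedding h.
Proof.
move=> hi hF hP; split=> //; split; first exact: hF.
move=> n phi d; exact: feval_hom.
Qed.

Lemma emb_inj M N (h : dom M -> dom N) : embedding h -> injective h.
Proof. by case. Qed.
Lemma emb_fhom M N (h : dom M -> dom N) : embedding h -> fhom h.
Proof. by case=> _ []. Qed.
Lemma emb_phom M N (h : dom M -> dom N) : embedding h -> phom h.
Proof.
case=> _ [_ H] P a.
exact: (H (parity P) (fatom (fun i => tvar L i)) a).
Qed.

Lemma emb_id M : embedding (fun x : dom M => x).
Proof. by apply: emb_intro. Qed.

Lemma emb_comp M N C (h : dom M -> dom N) (k : dom N -> dom C) :
  embedding h -> embedding k -> embedding (fun x => k (h x)).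
Proof.
move=> eh ek; apply: emb_intro.
- by move=> x y /(emb_inj ek) /(emb_inj eh).
- by move=> F a; rewrite (emb_fhom eh) (emb_fhom ek).
- by move=> P a; rewrite (emb_phom ek (fun i => h (a i))) (emb_phom eh).
Qed.

Lemma iso_refl M : isomorphic M M.
Proof. exists (fun x => x); split; [exact: emb_id | by move=> y; exists y]. Qed.

Lemma iso_trans M N C : isomorphic M N -> isomorphic N C -> isomorphic M C.
Proof.
case=> h [eh sh] [k [ek sk]]; exists (fun x => k (h x)); split.
  exact: emb_comp.
move=> z; case: (sk z) => y <-; case: (sh y) => x <-; by exists x.
Qed.

Lemma iso_sym M N : isomorphic M N -> isomorphic N M.
Proof.
case=> h [eh sh].
pose g y := proj1_sig (cid (sh y)).
have hg y : h (g y) = y by rewrite /g; case: cid.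
exists g; split; last first.
  by move=> x; exists (h x); apply: (emb_inj eh); rewrite hg.
apply: emb_intro.
- by move=> y1 y2 E; rewrite -(hg y1) -(hg y2) E.
- move=> F a; apply: (emb_inj eh); rewrite hg (emb_fhom eh).
  by congr fint; apply: functional_extensionality => i; rewrite hg.
- move=> P a; rewrite -(emb_phom eh (fun i => g (a i))).
  by congr pint; apply: functional_extensionality => i; rewrite hg.
Qed.

Lemma iso_emb M N : isomorphic M N -> embeds M N.
Proof. by case=> h [eh _]; exists h. Qed.

Lemma embeds_trans M N C : embeds M N -> embeds N C -> embeds M C.
Proof. by case=> h eh [k ek]; exists (fun x => k (h x)); apply: emb_comp. Qed.

Lemma emb_val N (S : subuniverse N) :
  embedding (fun x : dom (induced S) => proj1_sig x).
Proof.
apply: emb_intro => //.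
by move=> x y; apply: sig_eq.
Qed.

Lemma emb_into_induced M N (S : subuniverse N) (h : dom M -> dom (induced S)) :
  embedding (fun x => proj1_sig (h x)) -> embedding h.
Proof.
move=> e; apply: emb_intro.
- by move=> x y E; apply: (emb_inj e); rewrite /= E.
- by move=> F a; apply: sig_eq; rewrite /= (emb_fhom e).
- by move=> P a; rewrite /= (emb_phom e).
Qed.

Definition img M N (h : dom M -> dom N) (eh : embedding h) : subuniverse N.
refine (@MkSub A L N (fun y => exists x, h x = y) _).
move=> F args Ha.
pose pre i := proj1_sig (cid (Ha i)).
have hpre i : h (pre i) = args i by rewrite /pre; case: cid.
exists (fint (s:=M) pre); rewrite (emb_fhom eh).
by congr fint; apply: functional_extensionality => i.
Defined.

Lemma iso_img M N (h : dom M -> dom N) (eh : embedding h) :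
  isomorphic M (induced (img eh)).
Proof.
exists (fun x => exist (fun y => exists x, h x = y) (h x) (ex_intro _ x erefl)).
split; first by apply: emb_into_induced.
case=> y [x Hx]; exists x; apply: sig_eq => /=; exact: Hx.
Qed.

Lemma fin_gen_surj M N (h : dom M -> dom N) :
  fhom h -> (forall y, exists x, h x = y) -> fin_gen M -> fin_gen N.
Proof.
move=> hF sh [l Hl]; exists (List.map h l) => y S HS HX.
case: (sh y) => x <-.
apply: (Hl x (fun x => S (h x))).
  by move=> F a Ha; rewrite hF; apply: HS.
by move=> z Hz; apply: HX; apply: List.in_map.
Qed.

Lemma fin_gen_iso M N : isomorphic M N -> fin_gen M -> fin_gen N.
Proof. by case=> h [eh sh]; apply: fin_gen_surj => //; apply: emb_fhom. Qed.

Lemma emb_Age M N (h : dom M -> dom N) : embedding h -> fin_gen M -> Age N M.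
Proof.
move=> eh fg; exists (img eh); split; last exact: iso_img.
by apply: fin_gen_iso fg; apply: iso_img.
Qed.

End Gen.



Section Gen2.
Variables (A : ULChain) (L : Lang).
Implicit Types M N B C : Struc A L.

Definition gen_sub N (X : dom N -> Prop) : subuniverse N.
refine (@MkSub A L N (generated X) _).
move=> F a Ha S HS HX; apply: (HS) => i; exact: (Ha i S HS HX).
Defined.

Lemma gen_closed N (X : dom N -> Prop) F (a : 'I_(farity F) -> dom N) :
  (forall i, generated X (a i)) -> generated X (fint (s:=N) a).
Proof. move=> Ha S HS HX; apply: (HS) => i; exact: (Ha i S HS HX). Qed.

Lemma lift_list T (P : T -> Prop) (l : list T) :
  (forall y, List.In y l -> P y) -> exists l' : list (sig P), List.map (@proj1_sig _ P) l' = l.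
Proof.
elim: l => [|a l IH] H; first by exists nil.
case: IH => [y Hy|l' E]; first by apply: H; right.
by exists (exist P a (H a (or_introl erefl)) :: l'); rewrite /= E.
Qed.

Lemma fin_gen_gen N (l : list (dom N)) :
  fin_gen (induced (gen_sub (fun y => List.In y l))).
Proof.
have [l' El] : exists l' : list (dom (induced (gen_sub (fun y => List.In y l)))),
    List.map (@proj1_sig _ _) l' = l.
  apply: lift_list => y Hy S _ HX; exact: HX.
exists l' => x S HS HX.
pose Q v := generated (fun y => List.In y l) v /\
   forall Hv, S (exist (generated (fun y => List.In y l)) v Hv).
case: x => v Hv.
suff : Q v by case=> _; apply.
apply: Hv.
- move=> F a Ha; split.
    by apply: gen_closed => i; case: (Ha i).
  move=> Hv'.
  pose b i := exist (generated (fun y => List.In y l)) (a i) (proj1 (Ha i)).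
  have -> : exist _ (fint (s:=N) a) Hv' = fint (s:=induced (gen_sub (fun y => List.In y l))) b.
    by apply: sig_eq.
  by apply: HS => i; rewrite /b; apply: (proj2 (Ha i)).
- move=> y Hy; split; first by move=> S' _ HX'; exact: HX'.
  move=> Hv'; apply: HX.
  rewrite -El in Hy.
  case/List.in_map_iff: Hy => z [Ez Hz].
  suff -> : exist (generated (fun y => List.In y l)) y Hv' = z by [].
  by apply: sig_eq; rewrite Ez.
Qed.

Lemma emb_into_gen B N (h : dom B -> dom N) (l : list (dom B)) (X : dom N -> Prop) :
  embedding h -> (forall x, generated (fun y => List.In y l) x) ->
  (forall y, List.In y l -> X (h y)) -> embeds B (induced (gen_sub X)).
Proof.
move=> eh Hl HX.
have mem x : generated X (h x).
  apply: (Hl x (fun x => generated X (h x))).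
    move=> F a Ha; rewrite (emb_fhom eh).
    by apply: gen_closed.
  by move=> y Hy S _ HX'; apply: HX'; apply: HX.
exists (fun x => exist (generated X) (h x) (mem x)).
by apply: emb_into_induced.
Qed.

Lemma forward_dir (K : Struc A L -> Prop) N :
  (forall B, K B -> fin_gen B) -> same_class K (Age N) -> HP K /\ JEP K.
Proof.
move=> Kfg [H1 H2]; split.
- move=> B KB S fgS.
  case: (H1 B KB) => C [[T [fgT isoCT]] isoBC].
  case: (iso_trans isoBC isoCT) => h [eh _].
  have e : embedding (fun x : dom (induced S) => proj1_sig (h (proj1_sig x))).
    exact: (emb_comp (emb_comp (emb_val S) eh) (emb_val T)).
  case: (H2 _ (emb_Age e fgS)) => C' [KC' iso']; by exists C'.
- move=> B C KB KC.
  have toN X : K X -> exists h : dom X -> dom N, embedding h.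
    move=> KX; case: (H1 X KX) => C0 [[T [_ isoCT]] isoBC].
    case: (iso_trans isoBC isoCT) => h [eh _].
    exists (fun x => proj1_sig (h x)); exact: (emb_comp eh (emb_val T)).
  case: (toN B KB) => hB eB; case: (toN C KC) => hC eC.
  case: (Kfg B KB) => lB HB; case: (Kfg C KC) => lC HC.
  pose l := (List.map hB lB ++ List.map hC lC)%list.
  have AgeD : Age N (induced (gen_sub (fun y => List.In y l))).
    exists (gen_sub (fun y => List.In y l)); split; [exact: fin_gen_gen|exact: iso_refl].
  case: (H2 _ AgeD) => D' [KD' isoD].
  exists D'; split=> //; split.
  + apply: embeds_trans (iso_emb isoD).
    apply: (emb_into_gen eB HB) => y Hy; apply: List.in_or_app; left; exact: List.in_map.
  + apply: embeds_trans (iso_emb isoD).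
    apply: (emb_into_gen eC HC) => y Hy; apply: List.in_or_app; right; exact: List.in_map.
Qed.

End Gen2.



Section Colim.
Variables (A : ULChain) (L : Lang).
Variable D : nat -> Struc A L.
Variable f : forall n, dom (D n) -> dom (D n.+1).
Hypothesis hf : forall n, embedding (@f n).

Definition T := {n : nat & dom (D n)}.
Definition up (a : T) : T := existT _ (projT1 a).+1 (f (projT2 a)).
Definition E (a b : T) := exists i j, iter i up a = iter j up b.

Lemma E_refl a : E a a. Proof. by exists 0, 0. Qed.
Lemma E_sym a b : E a b -> E b a. Proof. by case=> i [j H]; exists j, i. Qed.
Lemma E_trans a b c : E a b -> E b c -> E a c.
Proof.
case=> i [j H] [i' [j' H']]; exists (i' + i), (j + j').
by rewrite !iterD H -H' -!iterD addnC.
Qed.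
Lemma E_up a : E a (up a). Proof. by exists 1, 0. Qed.

Definition Q := {P : T -> Prop | exists a, P = E a}.
Definition cls (a : T) : Q := exist _ (E a) (ex_intro _ a erefl).

Lemma cls_eq a b : E a b -> cls a = cls b.
Proof.
move=> H; apply: sig_eq => /=; apply: functional_extensionality => c.
apply: propositional_extensionality; split.
  by move=> H'; apply: E_trans (E_sym H) H'.
by move=> H'; apply: E_trans H H'.
Qed.

Lemma eq_cls a b : cls a = cls b -> E a b.
Proof.
move=> H; have : proj1_sig (cls b) b by apply: E_refl.
by rewrite -H.
Qed.

Lemma cls_surj (q : Q) : exists a, q = cls a.
Proof. case: q => P [a Ha]; exists a; exact: sig_eq. Qed.

Definition g (m : nat) (y : dom (D m)) : Q := cls (existT _ m y).

Lemma g_up m (y : dom (D m)) : g (f y) = g y.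
Proof. by apply: cls_eq; apply: E_sym; apply: E_up. Qed.

Lemma iter_up1 i a : projT1 (iter i up a) = i + projT1 a.
Proof. by elim: i => //= i ->. Qed.

Lemma up_inj : injective up.
Proof.
case=> m x [m' x'] /= H.
have E1 : m = m' by move: (f_equal (@projT1 _ _) H) => /= [].
subst m'.
have := Eqdep_dec.inj_pair2_eq_dec _ PeanoNat.Nat.eq_dec _ _ _ _ H.
by move/(emb_inj (hf m)) => /= ->.
Qed.

Lemma iter_up_inj i : injective (iter i up).
Proof. elim: i => //= i IH x y /up_inj; exact: IH. Qed.

Lemma g_inj m : injective (@g m).
Proof.
move=> x y /eq_cls [i [j H]].
have Eij : i = j.
  by move: (f_equal (@projT1 _ _) H); rewrite !iter_up1 /= => /addIn.
subst j; move/iter_up_inj: H => H.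
exact: (Eqdep_dec.inj_pair2_eq_dec _ PeanoNat.Nat.eq_dec _ _ _ _ H).
Qed.

Fixpoint lift k m {struct k} : dom (D m) -> dom (D (k + m)) :=
  match k return dom (D m) -> dom (D (k + m)) with
  | 0 => fun y => y
  | k'.+1 => fun y => f (lift k' y)
  end.
Arguments lift : clear implicits.

Lemma g_lift k m (y : dom (D m)) : g (lift k m y) = g y.
Proof. elim: k => //= k IH; by rewrite g_up. Qed.

Lemma lift_emb k m : embedding (lift k m).
Proof.
elim: k => /= [|k IH]; first exact: emb_id.
exact: (emb_comp IH (hf _)).
Qed.


Definition Lv (q : Q) m := exists y : dom (D m), q = g y.

Lemma Lv_le q m M : m <= M -> Lv q m -> Lv q M.
Proof.
move=> le [y ->]; rewrite -(subnK le).
exists (lift (M - m) m y); by rewrite g_lift.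
Qed.

Lemma Lv_ex q : exists m, Lv q m.
Proof. case: (cls_surj q) => [[m y] ->]; by exists m, y. Qed.

Lemma Lv_fam k (args : 'I_k -> Q) : exists m, forall i, Lv (args i) m.
Proof.
pose mi i := proj1_sig (cid (Lv_ex (args i))).
have Hmi i : Lv (args i) (mi i) by rewrite /mi; case: cid.
exists (\max_i mi i) => i; apply: Lv_le (Hmi i).
clearbody mi. exact: leq_bigmax.
Qed.

Lemma rep_at k (args : 'I_k -> Q) m : (forall i, Lv (args i) m) ->
  exists ys : 'I_k -> dom (D m), forall i, args i = g (ys i).
Proof.
move=> H; exists (fun i => proj1_sig (cid (H i))) => i; by case: cid.
Qed.

Lemma fint_change F m M (ys : 'I_(farity F) -> dom (D m)) (zs : 'I_(farity F) -> dom (D M)) :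
  m <= M -> (forall i, g (ys i) = g (zs i)) ->
  g (fint (s:=D m) ys) = g (fint (s:=D M) zs).
Proof.
move=> le H; have [k Ek] : exists k, M = k + m by exists (M - m); rewrite subnK.
subst M.
have Ez : zs = fun i => lift k m (ys i).
  by apply: functional_extensionality => i; apply: g_inj; rewrite g_lift H.
by rewrite Ez -(emb_fhom (lift_emb k m)) g_lift.
Qed.

Lemma pint_change P m M (ys : 'I_(parity P) -> dom (D m)) (zs : 'I_(parity P) -> dom (D M)) :
  m <= M -> (forall i, g (ys i) = g (zs i)) ->
  pint (s:=D m) ys = pint (s:=D M) zs.
Proof.
move=> le H; have [k Ek] : exists k, M = k + m by exists (M - m); rewrite subnK.
subst M.
have Ez : zs = fun i => lift k m (ys i).
  by apply: functional_extensionality => i; apply: g_inj; rewrite g_lift H.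
by rewrite Ez (emb_phom (lift_emb k m)).
Qed.

Lemma fint_wd F m m' (ys : 'I_(farity F) -> dom (D m)) (ys' : 'I_(farity F) -> dom (D m')) :
  (forall i, g (ys i) = g (ys' i)) ->
  g (fint (s:=D m) ys) = g (fint (s:=D m') ys').
Proof.
move=> H.
have [zs Hz] : exists zs : 'I_(farity F) -> dom (D (maxn m m')),
    forall i, g (ys i) = g (zs i).
  by apply: rep_at => i; apply: (Lv_le (leq_maxl m m')); exists (ys i).
rewrite (fint_change (leq_maxl m m') Hz); symmetry.
by apply: (fint_change (leq_maxr m m')) => i; rewrite -H.
Qed.

Lemma pint_wd P m m' (ys : 'I_(parity P) -> dom (D m)) (ys' : 'I_(parity P) -> dom (D m')) :
  (forall i, g (ys i) = g (ys' i)) ->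
  pint (s:=D m) ys = pint (s:=D m') ys'.
Proof.
move=> H.
have [zs Hz] : exists zs : 'I_(parity P) -> dom (D (maxn m m')),
    forall i, g (ys i) = g (zs i).
  by apply: rep_at => i; apply: (Lv_le (leq_maxl m m')); exists (ys i).
rewrite (pint_change (leq_maxl m m') Hz); symmetry.
by apply: (pint_change (leq_maxr m m')) => i; rewrite -H.
Qed.

Lemma fint_ex F (args : 'I_(farity F) -> Q) :
  exists q, exists m (ys : 'I_(farity F) -> dom (D m)),
    (forall i, args i = g (ys i)) /\ q = g (fint (s:=D m) ys).
Proof.
case: (Lv_fam args) => m /rep_at [ys H].
by exists (g (fint (s:=D m) ys)), m, ys.
Qed.

Lemma pint_ex P (args : 'I_(parity P) -> Q) :
  exists v : ul_car A, exists m (ys : 'I_(parity P) -> dom (D m)),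
    (forall i, args i = g (ys i)) /\ v = pint (s:=D m) ys.
Proof.
case: (Lv_fam args) => m /rep_at [ys H].
by exists (pint (s:=D m) ys), m, ys.
Qed.

Definition fintN F (args : 'I_(farity F) -> Q) : Q :=
  proj1_sig (cid (fint_ex args)).
Definition pintN P (args : 'I_(parity P) -> Q) : ul_car A :=
  proj1_sig (cid (pint_ex args)).

Definition colim : Struc A L := {| dom := Q; pint := pintN; fint := fintN |}.

Lemma g_emb m : embedding (fun y : dom (D m) => (g y : dom colim)).
Proof.
apply: emb_intro.
- exact: g_inj.
- move=> F ys; rewrite /= /fintN; case: cid => q [m' [ys' [H Eq]]] /=; rewrite Eq.
  by apply: fint_wd => i; rewrite H.
- move=> P ys; rewrite /= /pintN; case: cid => v [m' [ys' [H Eq]]] /=; rewrite Eq.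
  by apply: pint_wd => i; rewrite H.
Qed.

Lemma Lv_closed m F (a : 'I_(farity F) -> Q) :
  (forall i, Lv (a i) m) -> Lv (fint (s:=colim) a) m.
Proof.
case/rep_at => ys H.
have -> : a = fun i => g (ys i) by apply: functional_extensionality.
exists (fint (s:=D m) ys).
by rewrite (emb_fhom (g_emb m)).
Qed.

Lemma Lv_list (l : list Q) : exists m, forall y, List.In y l -> Lv y m.
Proof.
elim: l => [|a l [m Hm]]; first by exists 0.
case: (Lv_ex a) => m' Hm'.
exists (maxn m m') => y /= [<-|Hy].
  exact: Lv_le (leq_maxr m m') Hm'.
exact: Lv_le (leq_maxl m m') (Hm y Hy).
Qed.

End Colim.



Section Main.
Variables (A : ULChain) (L : Lang).

Lemma age_of_chain (K : Struc A L -> Prop) (D : nat -> Struc A L)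
  (f : forall n, dom (D n) -> dom (D n.+1)) (hf : forall n, embedding (f n)) :
  HP K -> (forall n, K (D n)) ->
  forall B, Age (colim f) B -> in_class K B.
Proof.
move=> HPK KD B [S [fgS iBS]].
have [l Hl] := fgS.
case: (Lv_list (List.map (fun x : dom (induced S) => proj1_sig x) l)) => m Hm.
have HS : forall x : dom (induced S), Lv (proj1_sig x) m.
  move=> x; apply: (Hl x (fun x : dom (induced S) => Lv (proj1_sig x) m)).
    move=> F a Ha; exact: (Lv_closed hf Ha).
  by move=> y Hy; apply: Hm; apply: List.in_map.
pose S' : subuniverse (D m) :=
  @MkSub A L (D m) (fun y => Defs.sub_mem S (g f y)) (fun F a Ha =>
    eq_ind_r (fun z => Defs.sub_mem S z) (sub_closed (s:=S) Ha) (emb_fhom (g_emb hf m) a)).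
have iS'S : isomorphic (induced S') (induced S).
  exists (fun y : dom (induced S') =>
     (exist (Defs.sub_mem S) (g f (proj1_sig y)) (proj2_sig y) : dom (induced S))).
  split.
    apply: emb_into_induced => /=.
    exact: (emb_comp (emb_val S') (g_emb hf m)).
  move=> x; case: (HS x) => y Ey.
  have Hy : Defs.sub_mem S' y by rewrite /= -Ey; exact: (proj2_sig x).
  by exists (exist _ y Hy); apply: sig_eq; rewrite /= Ey.
have iSS' := iso_sym iS'S.
have fgS' := fin_gen_iso iSS' fgS.
case: (HPK _ (KD m) S' fgS') => C [KC iC].
exists C; split=> //; exact: iso_trans iBS (iso_trans iSS' iC).
Qed.

Lemma backward1 (K : Struc A L -> Prop) :
  (forall B, K B -> fin_gen B) -> (exists B, K B) -> countable_class K ->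
  HP K -> JEP K -> exists N, same_class K (Age N).
Proof.
move=> Kfg [B0 KB0] [e He] HPK JEPK.
have [c [Kc Hc]] : exists c : nat -> Struc A L, (forall n, K (c n)) /\
    (forall B, K B -> exists n, isomorphic B (c n)).
  have Hn n : exists C, K C /\ (forall B, K B -> isomorphic B (e n) -> isomorphic B C).
    case: (classic (exists B, K B /\ isomorphic B (e n))) => [[B [KB iB]]|nB].
      exists B; split=> // B' KB' iB'; exact: iso_trans iB' (iso_sym iB).
    exists B0; split=> // B' KB' iB'; exfalso; apply: nB; by exists B'.
  exists (fun n => proj1_sig (cid (Hn n))); split.
    by move=> n; case: cid => C [].
  move=> B KB; case: (He B KB) => n iBn; exists n; case: (cid (Hn n)) => C [_ HC] /=; exact: (HC B KB iBn).
pose KS := {X : Struc A L | K X}.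
have step n (X : KS) : exists Y : KS,
    embeds (proj1_sig X) (proj1_sig Y) /\ embeds (c n) (proj1_sig Y).
  case: X => X KX; case: (JEPK X (c n) KX (Kc n)) => Y [KY [e1 e2]].
  by exists (exist _ Y KY).
pose Dseq := nat_rect (fun _ => KS) (exist _ B0 KB0) (fun n X => proj1_sig (cid (step n X))).
pose Ds n := proj1_sig (Dseq n).
have hD n : embeds (Ds n) (Ds n.+1) /\ embeds (c n) (Ds n.+1).
  by rewrite /Ds /=; case: cid.
pose ff n := proj1_sig (cid (proj1 (hD n))).
have hff n : embedding (ff n) by rewrite /ff; case: cid.
exists (colim ff); split.
- move=> B KB; case: (Hc B KB) => n [h1 [e1 _]].
  case: (proj2 (hD n)) => h2 e2.
  have ee := emb_comp (emb_comp e1 e2) (g_emb hff n.+1).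
  exists B; split; [exact: (emb_Age ee (Kfg B KB)) | exact: iso_refl].
- apply: (age_of_chain hff HPK) => n; exact: (proj2_sig (Dseq n)).
Qed.

Lemma part2 (K : Struc A L -> Prop) :
  (forall B, K B -> fin_gen B) -> (exists B, K B) ->
  HP K -> JEP K -> union_closed K -> exists N, same_class K (Age N).
Proof.
move=> Kfg [B0 KB0] HPK JEPK UC.
case: (classic (exists U, K U /\ forall B, K B -> embeds B U)) => [[U [KU HU]]|nU].
  exists U; split.
    move=> B KB; case: (HU B KB) => h eh.
    exists B; split; [exact: (emb_Age eh (Kfg B KB)) | exact: iso_refl].
  move=> B [S [fgS iBS]]; case: (HPK U KU S fgS) => C [KC iC].
  exists C; split=> //; exact: iso_trans iBS iC.
exfalso.
pose KS := {X : Struc A L | K X}.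
have step (X : KS) : exists Y : KS, exists h : dom (proj1_sig X) -> dom (proj1_sig Y),
    embedding h /\ ~ (forall y, exists x, h x = y).
  case: X => X KX /=.
  have : ~ (forall B, K B -> embeds B X) by move=> H; apply: nU; exists X.
  move=> H0; case: (not_all_ex_not _ _ H0) => B H1; case: (imply_to_and _ _ H1) => KB nB.
  case: (JEPK X B KX KB) => Y [KY [[h eh] [h' eh']]].
  exists (exist _ Y KY), h; split=> // sh.
  apply: nB.
  have iXY : isomorphic X Y by exists h.
  case: (iso_sym iXY) => k [ek _].
  exists (fun b => k (h' b)); exact: emb_comp eh' ek.
pose Dseq := nat_rect (fun _ => KS) (exist _ B0 KB0) (fun n X => proj1_sig (cid (step X))).
pose Ds n := proj1_sig (Dseq n).
have hD n : exists h : dom (Ds n) -> dom (Ds n.+1),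
    embedding h /\ ~ (forall y, exists x, h x = y).
  by rewrite /Ds /=; case: cid.
pose ff n := proj1_sig (cid (hD n)).
have hff n : embedding (ff n) by rewrite /ff; case: cid => h [].
have nsurj n : ~ (forall y, exists x, ff n x = y) by rewrite /ff; case: cid => h [].
have : in_class K (colim ff).
  apply: (UC (colim ff) nat (fun n => img (g_emb hff n))).
  - exact: (inhabits 0).
  - move=> i j.
    have sub i' j' : i' <= j' -> forall x, Defs.sub_mem (img (g_emb hff i')) x ->
        Defs.sub_mem (img (g_emb hff j')) x.
      move=> le x [y Ey].
      have : Lv x j' by apply: (Lv_le le); exists y; rewrite Ey.
      by case=> z Ez; exists z; rewrite Ez.
    case: (leqP i j) => [le|/ltnW le]; [left|right]; exact: sub.
  - move=> x; case: (Lv_ex x) => m [y Ey]; exists m; by exists y.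
  - move=> n; exists (Ds n); split; first exact: (proj2_sig (Dseq n)).
    exact: iso_sym (iso_img _).
case=> C [KC iNC].
have [l Hl] := fin_gen_iso (iso_sym iNC) (Kfg C KC).
case: (Lv_list l) => m Hm.
have allm (x : Q ff) : Lv x m.
  apply: (Hl x (fun x : Q ff => Lv x m)).
    move=> F a Ha; exact: (Lv_closed hff Ha).
  exact: Hm.
apply: (nsurj m) => z.
case: (allm (g ff z)) => y Ey; exists y.
apply: (g_inj hff); rewrite g_up; by symmetry.
Qed.

End Main.

Theorem theorem1 (A : ULChain) (L : Lang) :
  (forall K : Struc A L -> Prop,
      (forall B, K B -> fin_gen B) ->
      (exists B, K B) ->
      countable_class K ->
      ((exists N : Struc A L, same_class K (Age N)) <-> (HP K /\ JEP K)))
  /\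
  (forall K : Struc A L -> Prop,
      (forall B, K B -> fin_gen B) ->
      (exists B, K B) ->
      HP K -> JEP K -> union_closed K ->
      exists N : Struc A L, same_class K (Age N)).
Proof.
split.
  move=> K Kfg ne cnt; split.
    by case=> N H; apply: (forward_dir Kfg H).
  by case=> HPK JEPK; apply: backward1.
exact: part2.
Qed.
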